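(* Let $\epsilon>0$ be a constant. There exists a constant $\delta>0$ such that, for all sufficiently large $n$, if $V\subseteq\mathbb{Z}_2^{2n}$ is a uniformly random subspace of dimension $m\ge\epsilon n$, then $\Pr[V\subseteq V^\perp]\le2^{-\delta n^2}$.
   Context: Symplectic inner product on $\mathbb{Z}_2^{2n}$: $(\mathbf a,\mathbf b)\odot(\mathbf a',\mathbf b')=\mathbf a\cdot\mathbf b'+\mathbf a'\cdot\mathbf b\pmod2$. For a subspace $S$, $S^\perp=\{\mathbf v:\mathbf v\odot\mathbf w=0\ \forall\mathbf w\in S\}$ is its symplectic complement; $V\subseteq V^\perp$ means $V$ is isotropic. *)

(* Defs.v *)
From mathcomp Require Import all_boot all_algebra.
From Stdlib Require Import Reals.
Set Implicit Arguments. Unset Strict Implicit. Unset Printing Implicit Defensive.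
Import GRing.Theory.
Local Open Scope ring_scope.

(* Vectors of Z_2^{2n} are row vectors 'rV['F_2]_(n + n); the first n
   coordinates are a, the last n are b, for v = (a, b). *)
Definition symp (n : nat) (u v : 'rV['F_2]_(n + n)) : 'F_2 :=
  \sum_(i < n) (u 0 (lshift n i) * v 0 (rshift n i)
               + v 0 (lshift n i) * u 0 (rshift n i)).

(* Subspaces of 'rV_k are represented canonically by square matrices U with
   <<U>> = U (mxalgebra's canonical generator of a row space); the vectors of
   the subspace are the rows v with (v <= U)%MS, and its dimension is \rank U. *)
Definition subspace_vecs (k : nat) (U : 'M['F_2]_k) : {set 'rV['F_2]_k} :=
  [set v : 'rV['F_2]_k | (v <= U)%MS].

Definition subspaces_of_dim (k m : nat) : {set 'M['F_2]_k} :=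
  [set U : 'M['F_2]_k | (<<U>>%MS == U) && (\rank U == m)].

Definition symp_perp (n : nat) (S : {set 'rV['F_2]_(n + n)}) : {set 'rV['F_2]_(n + n)} :=
  [set v | [forall w in S, symp v w == 0]].

Definition isotropic (n : nat) (U : 'M['F_2]_(n + n)) : bool :=
  subspace_vecs U \subset symp_perp (subspace_vecs U).

Definition prob_isotropic (n m : nat) : R :=
  (INR #|[set U in subspaces_of_dim (n + n) m | isotropic U]|
   / INR #|subspaces_of_dim (n + n) m|)%R.

(* Main.v *)
Require Import Defs.
From mathcomp Require Import all_boot all_algebra.
From mathcomp Require Import zify.
From Stdlib Require Import Lia.
Set Implicit Arguments. Unset Strict Implicit. Unset Printing Implicit Defensive.
Import GRing.Theory.

Section Count.
Local Open Scope ring_scope.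

Lemma card_F2 : #|'F_2| = 2%N.
Proof. by rewrite card_Fp. Qed.

Lemma card_submx (N l : nat) (K : 'M['F_2]_N) :
  #|[set B : 'M['F_2]_(l, N) | (B <= K)%MS]| = (2 ^ (l * \rank K))%N.
Proof.
have -> : [set B : 'M['F_2]_(l, N) | (B <= K)%MS] =
          [set X *m row_base K | X in [set: 'M['F_2]_(l, \rank K)]].
  apply/setP => B; rewrite inE; apply/idP/imsetP.
    move=> sBK; have : (B <= row_base K)%MS by rewrite eq_row_base.
    by case/submxP => D ->; exists D; rewrite ?inE.
  by case=> X _ ->; rewrite -(eq_row_base K) submxMl.
rewrite card_imset; last exact/row_free_inj/row_base_free.
by rewrite cardsT card_mx card_F2.
Qed.

Definition Jm n : 'M['F_2]_(n + n) := block_mx 0 1%:M 1%:M 0.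

Lemma symp_mx n (u v : 'rV['F_2]_(n + n)) : symp u v = (u *m Jm n *m v^T) 0 0.
Proof.
rewrite /symp /Jm -[in RHS](hsubmxK u) -[in RHS](hsubmxK v).
rewrite mul_row_block !mulmx0 !mulmx1 add0r addr0 tr_row_mx mul_row_col.
rewrite !mxE big_split /= addrC; congr (_ + _); apply: eq_bigr => i _; rewrite !mxE //.
by rewrite mulrC.
Qed.

Lemma Jm_unit n : Jm n \in unitmx.
Proof.
suff /mulmx1_unit[] : Jm n *m Jm n = 1%:M by [].
by rewrite /Jm mulmx_block !mulmx0 !mulmx1 !addr0 !add0r -scalar_mx_block.
Qed.

Lemma entry_symp n k l (B : 'M['F_2]_(l, n + n)) (A : 'M['F_2]_(k, n + n)) i j :
  (B *m (Jm n *m A^T)) i j = symp (row i B) (row j A).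
Proof.
rewrite symp_mx mulmxA.
rewrite -row_mul -row_mul !mxE; apply: eq_bigr => t _; rewrite !mxE.
by apply: congr2 => //; apply: eq_bigr => s _; rewrite !mxE.
Qed.

Lemma rank_JAT n k (A : 'M['F_2]_(k, n + n)) : row_free A -> \rank (Jm n *m A^T) = k.
Proof.
move=> fA; rewrite -mxrank_tr trmx_mul trmxK mxrankMfree; first exact/eqP.
by rewrite row_free_unit unitmx_tr Jm_unit.
Qed.

Lemma card_orth n k l (A : 'M['F_2]_(k, n + n)) : row_free A ->
  #|[set B : 'M['F_2]_(l, n + n) | [forall i, forall j, symp (row i B) (row j A) == 0]]|
  = (2 ^ (l * (n + n - k)))%N.
Proof.
move=> fA.
have Ek : (n + n - k)%N = \rank (kermx (Jm n *m A^T)) by rewrite mxrank_ker rank_JAT.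
rewrite Ek -card_submx; congr #|pred_of_set _|.
apply/setP => B; rewrite !inE sub_kermx; apply/forallP/eqP.
  move=> H; apply/matrixP => i j; rewrite entry_symp mxE; exact/eqP/(forallP (H i)).
by move=> E i; apply/forallP => j; rewrite -entry_symp E mxE.
Qed.

Lemma row_free_usub N k l (M : 'M['F_2]_(k + l, N)) : row_free M -> row_free (usubmx M).
Proof.
move=> fM; rewrite /row_free eqn_leq rank_leq_row /=.
have := leq_of_leqif (mxrank_adds_leqif (usubmx M) (dsubmx M)).
rewrite addsmxE vsubmxK (eqP fM) => H.
rewrite -(leq_add2r l); apply: leq_trans H _; rewrite leq_add2l; exact: rank_leq_row.
Qed.

Definition orthS n k l (A : 'M['F_2]_(k, n + n)) :=
  [set B : 'M['F_2]_(l, n + n) | [forall i, forall j, symp (row i B) (row j A) == 0]].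

Lemma num_bound n k l :
  (#|[set M : 'M['F_2]_(k + l, n + n) |
      row_free M && [forall i, forall j, symp (row i M) (row j M) == 0%R]]|
   <= 2 ^ (k * (n + n)) * 2 ^ (l * (n + n - k)))%N.
Proof.
set S := [set M | _].
rewrite -sum1_card (partition_big (@usubmx _ k l (n + n)) predT) //=.
have -> : (2 ^ (k * (n + n)) = #|'M['F_2]_(k, n + n)|)%N by rewrite card_mx card_F2.
rewrite -sum1_card big_distrl /=; apply: leq_sum => A _; rewrite mul1n.
rewrite sum1_card.
have [fA | nfA] := boolP (row_free A); last first.
  rewrite eq_card0 // => M /=; apply/negbTE/negP; rewrite unfold_in /= /S inE => /andP[/andP[fM _] /eqP eA].
  by move: nfA; rewrite -eA row_free_usub.
rewrite -(card_orth l fA) -(card_in_imset (f := @dsubmx _ k l (n + n))); last first.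
  move=> M1 M2; rewrite !unfold_in /= => /andP[_ /eqP e1] /andP[_ /eqP e2] e.
  by rewrite -(vsubmxK M1) -(vsubmxK M2) e1 e2 e.
apply: subset_leq_card; apply/subsetP => B /imsetP[M]; rewrite unfold_in /= /S !inE.
case/andP => /andP[_ /forallP H] /eqP eA ->; apply/forallP => i; apply/forallP => j.
by rewrite row_dsubmx -eA row_usubmx (forallP (H _)).
Qed.

Lemma card_kerrow N m (x : 'rV['F_2]_m) : x != 0 ->
  #|[set M : 'M['F_2]_(m, N) | x *m M == 0]| = (2 ^ (N * (m - 1)))%N.
Proof.
move=> nx.
have rx : \rank x^T = 1%N.
  rewrite mxrank_tr; apply/eqP; rewrite eqn_leq rank_leq_row lt0n mxrank_eq0 nx.
  by [].
have -> : (m - 1)%N = \rank (kermx x^T) by rewrite mxrank_ker rx.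
rewrite -card_submx -(card_imset _ (@trmx_inj _ _ _)); congr #|pred_of_set _|.
apply/setP => Y; rewrite inE sub_kermx; apply/imsetP/idP.
  case=> M; rewrite inE => /eqP xM ->; have := congr1 trmx xM; rewrite trmx_mul trmx0 => ->; exact: eqxx.
move=> /eqP YX; exists Y^T; last by rewrite trmxK.
by rewrite inE; apply/eqP; apply: trmx_inj; rewrite trmx_mul trmxK YX trmx0.
Qed.

Lemma den_bound N m : (1 <= m <= N)%N ->
  (2 ^ (N * (m - 1)) <= #|[set M : 'M['F_2]_(m, N) | row_free M]|)%N.
Proof.
case/andP => m1 mN.
have Hnf : (#|[set M : 'M['F_2]_(m, N) | ~~ row_free M]| <= (2 ^ m - 1) * 2 ^ (N * (m - 1)))%N.
  rewrite -sum1dep_card.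
  apply: (@leq_trans (\sum_(M : 'M['F_2]_(m, N) | ~~ row_free M) \sum_(x : 'rV['F_2]_m | (x != 0%R) && (x *m M == 0%R)) 1)%N).
    apply: leq_sum => M nfM; rewrite sum1dep_card card_gt0.
    apply/set0Pn.
    move: nfM; rewrite -kermx_eq0 => nK.
    have : ~~ [forall i, row i (kermx M) == 0].
      apply: contra nK => /forallP H; apply/eqP/row_matrixP => i; rewrite row0; exact/eqP.
    rewrite negb_forall => /existsP[i ri].
    by exists (row i (kermx M)); rewrite inE ri /= -row_mul mulmx_ker row0.
  rewrite (exchange_big_dep (fun x : 'rV['F_2]_m => x != 0)) /=; last by move=> ? ? _ /andP[].
  apply: (@leq_trans (\sum_(x : 'rV['F_2]_m | x != 0%R) 2 ^ (N * (m - 1)))%N).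
    apply: leq_sum => x nx; rewrite -(card_kerrow N nx) sum1dep_card.
    by apply: subset_leq_card; apply/subsetP => M; rewrite !inE => /andP[_ /andP[]].
  rewrite sum_nat_const leq_mul2r; apply/orP; right.
  by have := cardC1 (0 : 'rV['F_2]_m); rewrite card_mx card_F2 mul1n subn1 => <-.
have Ecard := cardsC [set M : 'M['F_2]_(m, N) | row_free M].
have EC : ~: [set M : 'M['F_2]_(m, N) | row_free M] = [set M | ~~ row_free M].
  by apply/setP => M; rewrite !inE.
rewrite EC in Ecard.
move: Ecard Hnf; rewrite card_mx card_F2.
have -> : (m * N = N + N * (m - 1))%N by rewrite mulnC -{1}(subnK m1) mulnDr muln1 addnC.
rewrite expnD.
have : (2 ^ m <= 2 ^ N)%N by rewrite leq_exp2l.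
have : (1 <= 2 ^ m)%N by rewrite expn_gt0.
move: (2 ^ m)%N (2 ^ N)%N (2 ^ (N * (m - 1)))%N => P Q X.
move: #|[set M : 'M['F_2]_(m, N) | row_free M]| #|[set M : 'M['F_2]_(m, N) | ~~ row_free M]| => a b.
move=> P1 PQ E H.
have : (P * X <= a + b)%N by rewrite E leq_mul2r PQ orbT.
rewrite mulnBl mul1n in H.
move=> H2.
have H3 : (X <= P * X)%N by rewrite leq_pmull.
move: H H2 H3; move: (P * X)%N => PX.
move=> H H2 H3; rewrite -(leq_add2r b); apply: leq_trans _ H2.
by rewrite -(subnK H3) addnC leq_add2r.
Qed.

Definition fib N m (U : 'M['F_2]_N) :=
  [set M : 'M['F_2]_(m, N) | row_free M && (<<M>>%MS == U)].

Lemma ebase_eq N (U : 'M['F_2]_N) : (U :=: (pid_mx (\rank U) : 'M_N) *m row_ebase U)%MS.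
Proof.
rewrite -{1}(mulmx_ebase U) -mulmxA; apply: eqmxMfull.
by rewrite row_full_unit col_ebase_unit.
Qed.

Lemma fib_le N m (U U' : 'M['F_2]_N) :
  U \in subspaces_of_dim N m -> U' \in subspaces_of_dim N m ->
  (#|fib m U| <= #|fib m U'|)%N.
Proof.
rewrite !inE => /andP[/eqP gU /eqP rU] /andP[/eqP gU' /eqP rU'].
set P := invmx (row_ebase U) *m row_ebase U'.
have uP : P \in unitmx by rewrite unitmx_mul unitmx_inv !row_ebase_unit.
have fP : row_free P by rewrite row_free_unit.
rewrite -(card_imset _ (row_free_inj (m := m) fP)).
apply: subset_leq_card; apply/subsetP => X /imsetP[M]; rewrite !inE.
case/andP => fM /eqP gM ->{X}.
rewrite /row_free mxrankMfree // -/(row_free M) fM /=.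
rewrite -gU'; apply/eqP/genmxP/eqmxP.
have eM : (M :=: (pid_mx m : 'M_N) *m row_ebase U)%MS.
  apply: eqmx_trans (eqmx_sym (genmxE M)) _; rewrite gM -{1}rU; exact: ebase_eq.
apply: eqmx_trans (eqmxMr P eM) _.
rewrite /P mulmxA mulmxK ?row_ebase_unit //.
apply: eqmx_sym; rewrite -{1}rU'; exact: ebase_eq.
Qed.

Lemma sum_fib N m (Q : pred 'M['F_2]_N) :
  #|[set M : 'M['F_2]_(m, N) | row_free M && Q <<M>>%MS]| =
  (\sum_(U | (U \in subspaces_of_dim N m) && Q U) #|fib m U|)%N.
Proof.
rewrite -sum1dep_card (partition_big (fun M : 'M['F_2]_(m, N) => <<M>>%MS)
   (fun U => (U \in subspaces_of_dim N m) && Q U)); last first.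
  move=> M /andP[fM qM]; rewrite qM andbT inE genmx_id eqxx mxrank_gen /=.
  exact: fM.
apply: eq_bigr => U /andP[_ qU]; rewrite sum1dep_card; congr #|pred_of_set _|.
apply/setP => M; rewrite !inE.
by case: (boolP (<<M>>%MS == U)) => [/eqP ->|]; rewrite ?qU ?andbT ?andbF.
Qed.

Lemma fib_const N m (A : {set 'M['F_2]_N}) :
  A \subset subspaces_of_dim N m ->
  forall U0, U0 \in subspaces_of_dim N m ->
  (\sum_(U in A) #|fib m U| = #|A| * #|fib m U0|)%N.
Proof.
move=> /subsetP sA U0 U0s; rewrite -sum_nat_const; apply: eq_bigr => U UA.
by apply/eqP; rewrite eqn_leq !fib_le // sA.
Qed.

Lemma nat_main n k l : (1 <= k + l)%N -> (k + l <= n + n)%N ->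
  (0 < #|subspaces_of_dim (n + n) (k + l)|)%N /\
  (#|[set U in subspaces_of_dim (n + n) (k + l) | isotropic U]| * 2 ^ (k * l)
     <= 2 ^ (n + n) * #|subspaces_of_dim (n + n) (k + l)|)%N.
Proof.
move=> m1 mN.
set All := subspaces_of_dim (n + n) (k + l).
set Iso := [set U in All | isotropic U].
have Hden := sum_fib (k + l) (predT : pred 'M['F_2]_(n + n)).
have Hnum := sum_fib (k + l) (@isotropic n).
have E1 : [set M : 'M['F_2]_(k + l, n + n) | row_free M && predT <<M>>%MS] =
          [set M | row_free M] by apply/setP => M; rewrite !inE andbT.
rewrite E1 (eq_bigl (fun U => U \in All)) in Hden; last by move=> U; rewrite andbT.
rewrite (eq_bigl (fun U => U \in Iso)) in Hnum; last by move=> U; rewrite !inE.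
have Dlb := @den_bound (n + n) (k + l) (introT andP (conj m1 mN)).
have [U0 U0A] : exists U0, U0 \in All.
  apply/set0Pn; apply/negP => /eqP A0; move: Dlb; rewrite Hden big_pred0; last first.
    by move=> U; rewrite A0 inE.
  by rewrite leqn0 expn_eq0.
rewrite (fib_const (subxx All) U0A) in Hden.
rewrite (fib_const (m := k + l) (A := Iso) _ U0A) in Hnum; last first.
  by apply/subsetP => U; rewrite inE => /andP[].
set g := #|fib (k + l) U0| in Hden Hnum.
have gpos : (0 < g)%N.
  rewrite lt0n; apply/negP => /eqP g0; move: Dlb; rewrite Hden g0 muln0.
  by rewrite leqn0 expn_eq0.
split.
  rewrite lt0n; apply/negP => /eqP a0; move: Dlb; rewrite Hden a0 mul0n.
  by rewrite leqn0 expn_eq0.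
rewrite -(leq_pmul2r gpos) mulnAC -Hnum -mulnA -Hden.
have Hsub : [set M : 'M['F_2]_(k + l, n + n) | row_free M && isotropic <<M>>%MS] \subset
   [set M | row_free M && [forall i, forall j, symp (row i M) (row j M) == 0%R]].
  apply/subsetP => M; rewrite !inE => /andP[-> iso] /=.
  apply/forallP => i; apply/forallP => j.
  have ri : forall t, row t M \in subspace_vecs <<M>>%MS.
    by move=> t; rewrite inE genmxE row_sub.
  have := subsetP iso _ (ri i); rewrite inE => /forallP/(_ (row j M)).
  by rewrite ri.
apply: leq_trans (leq_mul (subset_leq_card Hsub) (leqnn _)) _.
apply: leq_trans (leq_mul (num_bound n k l) (leqnn _)) _.
apply: leq_trans _ (leq_mul (leqnn _) Dlb).
rewrite -!expnD leq_exp2l //.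
have kN : (k <= n + n)%N by lia.
apply/eqP; nia.
Qed.

End Count.

From Stdlib Require Import Lra Psatz.
From Stdlib Require Import Reals.
Open Scope R_scope.

Lemma INR_expn2 (e : nat) : INR (expn 2 e) = 2 ^ e.
Proof.
elim: e => [|e IH]; first by rewrite expn0 /=.
by rewrite expnS -multE mult_INR IH /=.
Qed.

Lemma INR_addn (a b : nat) : INR (addn a b) = INR a + INR b.
Proof. by rewrite -plusE plus_INR. Qed.

Lemma INR_muln (a b : nat) : INR (muln a b) = INR a * INR b.
Proof. by rewrite -multE mult_INR. Qed.

Lemma INR_lenat (a b : nat) : (a <= b)%nat -> INR a <= INR b.
Proof. by move/leP; apply: le_INR. Qed.

Theorem lemmaD4 :
  forall eps : R, 0 < eps ->
  exists delta : R, 0 < delta /\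
  exists N : nat, forall n m : nat,
    (N <= n)%nat -> eps * INR n <= INR m -> (m <= n + n)%nat ->
    prob_isotropic n m <= Rpower 2 (- (delta * INR n ^ 2)).
Proof.
move=> eps Heps.
exists (eps * eps / 8); split; first by nra.
set y := / eps.
have ey : eps * y = 1 by rewrite /y; field; lra.
have y0 : 0 < y by apply: Rinv_0_lt_compat.
have [N0 HN0] := INR_unbounded ((4 * eps + 16) * y * y + y).
exists N0 => n m HN Hm Hm2n.
have xN : (4 * eps + 16) * y * y + y < INR n.
  by apply: Rlt_le_trans HN0 (INR_lenat HN).
have ex1 : 1 < eps * INR n.
  have : eps * ((4 * eps + 16) * y * y + y) < eps * INR n by apply: Rmult_lt_compat_l.
  have : 0 < eps * ((4 * eps + 16) * y * y) by apply: Rmult_lt_0_compat => //; nra.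
  nra.
have ex2 : 4 * eps + 16 < eps * eps * INR n.
  have : eps * eps * ((4 * eps + 16) * y * y + y) < eps * eps * INR n.
    by apply: Rmult_lt_compat_l; nra.
  have : eps * eps * ((4 * eps + 16) * y * y + y) = 4 * eps + 16 + eps.
    by rewrite /y; field; lra.
  nra.
have [k [l [Em [kl lk]]]] : exists k l, m = (k + l)%nat /\ (k <= l)%nat /\ (l <= k + 1)%nat.
  exists (m %/ 2)%nat, (m - m %/ 2)%nat; lia.
subst m.
have m1 : (1 <= k + l)%nat.
  apply/leP; apply: INR_lt; rewrite /=; lra.
have [Apos Hnat] := nat_main m1 Hm2n.
rewrite /prob_isotropic.
move: Hnat Apos; set I := #|_|; set A := #|_| => Hnat Apos.
have A0 : 0 < INR A by apply: lt_0_INR; apply/ltP.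
have HR : INR I * 2 ^ (k * l) <= 2 ^ (n + n) * INR A.
  by move: (INR_lenat Hnat); rewrite !INR_muln !INR_expn2.
have p0 : 0 < 2 ^ (k * l) by apply: pow_lt; lra.
apply: (Rle_trans _ (2 ^ (n + n) / 2 ^ (k * l))).
  have -> : INR I / INR A = (INR I * 2 ^ (k * l)) * / (INR A * 2 ^ (k * l)).
    by field; split; lra.
  have -> : 2 ^ (n + n) / 2 ^ (k * l) = (2 ^ (n + n) * INR A) * / (INR A * 2 ^ (k * l)).
    by field; split; lra.
  apply: Rmult_le_compat_r => //; apply/Rlt_le/Rinv_0_lt_compat; nra.
have two : 0 < 2 by lra.
rewrite -!(Rpower_pow _ _ two) /Rdiv -Rpower_Ropp -Rpower_plus.
apply: Rle_Rpower; first lra.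
have Hk := INR_lenat kl.
have Hl := INR_lenat lk.
rewrite INR_addn /= in Hl.
rewrite INR_addn in Hm.
rewrite INR_addn INR_muln.
have x0 : 0 <= INR n by apply: pos_INR.
have a0 : 0 <= INR k by apply: pos_INR.
have h1 : eps * INR n - 1 <= 2 * INR k by lra.
have h2 : 0 <= eps * INR n - 1 by lra.
have h3 : (eps * INR n - 1) * (eps * INR n - 1) <= 4 * (INR k * INR k) by nra.
have h4 : INR k * INR k <= INR k * INR l by nra.
have h5 : (4 * eps + 16) * INR n <= eps * eps * INR n * INR n by nra.
nra.
Qed.
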